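(* Let $\mathcal M=(M,<,+,0,\ldots)$ be a definably complete locally o-minimal expansion of an ordered abelian group. Let $C\subseteq M^m$ be a definable, closed and bounded set and let $\varphi,\psi:C\to M_{>0}$ be definable functions such that for every $x\in C$ there is $\delta>0$ with $\varphi(x')\ge\psi(x)$ for all $x'\in C$ satisfying $|x'-x|<\delta$. Then $\inf\varphi(C)>0$.
   Context: Definable = with parameters; definably complete: sup/inf of definable subsets of $M$ exist in $M\cup\{\pm\infty\}$; locally o-minimal: each definable subset of $M$ is, near each point, a finite union of points and open intervals. $M_{>0}=\{x\in M:x>0\}$, $|x|=\max_i|x_i|$. *)

(* Defs.v *)
From HB Require Import structures.
From mathcomp Require Import all_boot all_order all_algebra.
Set Implicit Arguments. Unset Strict Implicit. Unset Printing Implicit Defensive.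
Import GRing.Theory.
Local Open Scope ring_scope.

Section Defs.
Variables (M : zmodType) (lt : M -> M -> Prop).

Definition le (x y : M) : Prop := lt x y \/ x = y.

Definition ordered_group : Prop :=
  [/\ (forall x, ~ lt x x),
      (forall x y z, lt x y -> lt y z -> lt x z),
      (forall x y, [\/ lt x y, x = y | lt y x]) &
      (forall x y z, lt x y -> lt (x + z) (y + z))].

Definition init n (z : 'I_n.+1 -> M) : 'I_n -> M :=
  fun i => z (widen_ord (leqnSn n) i).
Definition tailc n (z : 'I_n.+1 -> M) : 'I_n -> M :=
  fun i => z (lift ord0 i).

(* A structure on (M,<,+) in the sense of van den Dries: for each n a Boolean
   algebra D n of subsets of M^n, closed under products with M, projections,
   containing the diagonals, the order, the graph of +, and all points
   (so "definable" = definable with parameters). *)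
Record is_structure (D : forall n, (('I_n -> M) -> Prop) -> Prop) : Prop := {
  st_empty : forall n, D n (fun _ => False);
  st_compl : forall n A, D n A -> D n (fun x => ~ A x);
  st_union : forall n A B, D n A -> D n B -> D n (fun x => A x \/ B x);
  st_prodr : forall n A, D n A -> D n.+1 (fun z => A (init z));
  st_prodl : forall n A, D n A -> D n.+1 (fun z => A (tailc z));
  st_diag  : forall n, D n.+1 (fun z => z ord0 = z ord_max);
  st_proj  : forall n A, D n.+1 A ->
               D n (fun x => exists z, A z /\ forall i, init z i = x i);
  st_lt    : D 2 (fun z => lt (z ord0) (z ord_max));
  st_add   : D 3 (fun z => z ord0 + z (inord 1) = z ord_max);
  st_point : forall a, D 1 (fun z => z ord0 = a)
}.

Definition def1 (D : forall n, (('I_n -> M) -> Prop) -> Prop) (A : M -> Prop) :=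
  D 1 (fun z => A (z ord0)).

Definition is_lub (A : M -> Prop) (s : M) : Prop :=
  (forall y, A y -> le y s) /\ (forall t, (forall y, A y -> le y t) -> le s t).
Definition is_glb (A : M -> Prop) (s : M) : Prop :=
  (forall y, A y -> le s y) /\ (forall t, (forall y, A y -> le t y) -> le t s).

(* Definably complete: every definable subset of M has sup and inf in
   M u {+-oo}; i.e. nonempty bounded-above (below) sets have a sup (inf) in M. *)
Definition def_complete (D : forall n, (('I_n -> M) -> Prop) -> Prop) : Prop :=
  forall A, def1 D A -> (exists a, A a) ->
    ((exists b, forall y, A y -> le y b) -> exists s, is_lub A s) /\
    ((exists b, forall y, A y -> le b y) -> exists s, is_glb A s).

Definition loc_ominimal (D : forall n, (('I_n -> M) -> Prop) -> Prop) : Prop :=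
  forall A, def1 D A -> forall a, exists l u, lt l a /\ lt a u /\
    exists (k : nat) (p : 'I_k -> M) (j : nat) (c d : 'I_j -> M),
      forall x, lt l x -> lt x u ->
        (A x <-> (exists i, x = p i) \/ (exists i, lt (c i) x /\ lt x (d i))).

Definition near_box m (delta : M) (x y : 'I_m -> M) : Prop :=
  forall i, lt (- delta) (y i - x i) /\ lt (y i - x i) delta.

Definition closed_set m (C : ('I_m -> M) -> Prop) : Prop :=
  forall x, ~ C x -> exists delta, lt 0 delta /\
    forall y, near_box delta x y -> ~ C y.

Definition bounded_set m (C : ('I_m -> M) -> Prop) : Prop :=
  exists r, forall x, C x -> forall i, lt (- r) (x i) /\ lt (x i) r.

Definition def_fun (D : forall n, (('I_n -> M) -> Prop) -> Prop) m (C : ('I_m -> M) -> Prop) (f : ('I_m -> M) -> M) :=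
  D m.+1 (fun z => C (init z) /\ z ord_max = f (init z)).

End Defs.

(* Main.v *)
Require Import Defs.
From mathcomp Require Import all_boot all_order all_algebra.
From Stdlib Require Import Classical FunctionalExtensionality PropExtensionality.
Import GRing.Theory.
Local Open Scope ring_scope.

Section All.
Variables (M : zmodType) (lt : M -> M -> Prop)
  (D : forall n, (('I_n -> M) -> Prop) -> Prop).
Hypothesis HD : is_structure lt D.
Hypothesis HM : ordered_group lt.

Lemma lt_irr x : ~ lt x x. Proof. by case: HM. Qed.
Lemma lt_tr x y z : lt x y -> lt y z -> lt x z.
Proof. case: HM => _ H _ _; exact: H. Qed.
Lemma lt_tri x y : [\/ lt x y, x = y | lt y x].
Proof. by case: HM. Qed.
Lemma ltD x y z : lt x y -> lt (x + z) (y + z).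
Proof. case: HM => _ _ _ H; exact: H. Qed.
Lemma ltDE x y z : lt (x + z) (y + z) <-> lt x y.
Proof.
split; last exact: ltD.
by move=> /(ltD _ _ (-z)); rewrite !addrK.
Qed.
Lemma nlt_le x y : ~ lt x y -> le lt y x.
Proof.
move=> H; case: (lt_tri x y) => [h|->|h]; by [|right|left].
Qed.
Lemma le_nlt x y : le lt x y -> ~ lt y x.
Proof.
case=> [h|->] h'; last exact: (lt_irr _ h').
exact: (lt_irr _ (lt_tr _ _ _ h h')).
Qed.
Lemma le_lt x y z : le lt x y -> lt y z -> lt x z.
Proof. case=> [h|->] // h'; exact: lt_tr _ _ _ h h'. Qed.
Lemma lt_le x y z : lt x y -> le lt y z -> lt x z.
Proof. move=> h [h'|<-] //; exact: lt_tr _ _ _ h h'. Qed.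
Lemma le_tr x y z : le lt x y -> le lt y z -> le lt x z.
Proof. case=> [h|->] // h'; left; exact: lt_le _ _ _ h h'. Qed.
Lemma lt_neg x y : lt x y -> lt (-y) (-x).
Proof.
move=> /(ltD _ _ (-x + -y)); rewrite addNKr [-x + -y]addrC addNKr //.
Qed.
Lemma boxlo d u c : lt (-d) (u - c) <-> lt c (u + d).
Proof.
rewrite -(ltDE _ _ (c + d)).
have -> : -d + (c + d) = c by rewrite addrC -addrA addrN addr0.
by rewrite addrA addrNK.
Qed.
Lemma boxhi d u c : lt (u - c) d <-> lt u (d + c).
Proof.
rewrite -(ltDE _ _ c).
by rewrite addrNK.
Qed.
Lemma pos_neg d : lt 0 d -> lt (-d) 0.
Proof. by move=> /lt_neg; rewrite oppr0. Qed.
Lemma lt_addpos x d : lt 0 d -> lt x (x + d).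
Proof. by move=> /(ltD _ _ x); rewrite add0r addrC. Qed.
Lemma lt_subpos x d : lt 0 d -> lt (x - d) x.
Proof. by move=> /(ltD _ _ (x - d)); rewrite add0r [d + _]addrC addrNK. Qed.
Lemma minpos d1 d2 : lt 0 d1 -> lt 0 d2 ->
  exists d, [/\ lt 0 d, le lt d d1 & le lt d d2].
Proof.
move=> h1 h2; case: (lt_tri d1 d2) => [h|<-|h].
- by exists d1; split => //; [right|left].
- by exists d1; split => //; right.
- by exists d2; split => //; [left|right].
Qed.
Lemma box_mono d d' u : le lt d d' -> lt (-d) u /\ lt u d -> lt (-d') u /\ lt u d'.
Proof.
move=> h [h1 h2]; split; last exact: lt_le _ _ _ h2 h.
case: h => [h|<-] //; exact: lt_tr _ _ _ (lt_neg _ _ h) h1.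
Qed.
Set Implicit Arguments. Unset Strict Implicit.

Lemma fE n (f : 'I_n -> M) (i j : 'I_n) : val i = val j -> f i = f j.
Proof. by move=> /ord_inj ->. Qed.

Lemma Dext n (A B : ('I_n -> M) -> Prop) :
  D n A -> (forall x, A x <-> B x) -> D n B.
Proof.
move=> HA HAB; have -> : B = A; last by [].
apply: functional_extensionality => x; apply: propositional_extensionality.
by split; apply HAB.
Qed.

Lemma Dtrue n : D n (fun _ => True).
Proof.
eapply Dext; first exact: (st_compl HD (st_empty HD n)).
by move=> x; split => // _ [].
Qed.

Lemma Dnot n A : D n A -> D n (fun x => ~ A x).
Proof. exact: (st_compl HD). Qed.

Lemma Dor n A B : D n A -> D n B -> D n (fun x => A x \/ B x).
Proof. exact: (st_union HD). Qed.

Lemma Dand n A B : D n A -> D n B -> D n (fun x => A x /\ B x).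
Proof.
move=> HA HB; eapply Dext.
  exact: (Dnot (Dor (Dnot HA) (Dnot HB))).
move=> x; split; last by move=> [a b] [].
by move=> H; split; apply: NNPP => H'; apply: H; [left|right].
Qed.

Lemma Dimp n A B : D n A -> D n B -> D n (fun x => A x -> B x).
Proof.
move=> HA HB; eapply Dext; first exact: (Dor (Dnot HA) HB).
move=> x; split; first by case=> // H1 H2.
by move=> H; case: (classic (A x)) => H'; [right; apply: H|left].
Qed.

Lemma Dif n (b : bool) A : D n A -> D n (fun x => b -> A x).
Proof.
move=> HA; case: b.
  by apply: (Dext HA) => x; split => [? _ //|H]; apply: H.
by apply: (Dext (@Dtrue n)) => x; split.
Qed.

Lemma Dall_fin n k (P : 'I_k -> ('I_n -> M) -> Prop) :
  (forall l, D n (P l)) -> D n (fun x => forall l, P l x).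
Proof.
elim: k P => [|k IH] P HP.
  apply: (Dext (@Dtrue n)) => x; split => // _ [] //.
have := Dand (HP ord0) (IH (fun l => P (lift ord0 l)) (fun l => HP _)).
move/Dext; apply.
move=> x; split; last by move=> H; split => [|l]; apply: H.
move=> [H0 H1] l; case: (unliftP ord0 l) => [j ->|->] //.
Qed.

Lemma Dpadr K A : D K A -> forall N (H : (K <= N)%N),
  D N (fun w => A (fun l => w (widen_ord H l))).
Proof.
move=> HA; elim => [|N IH] H.
  have eK : K = 0%N by apply/eqP; rewrite -leqn0.
  subst K.
  apply: (Dext HA) => x.
  have -> : (fun l => x (widen_ord H l)) = x => //.
  by apply: functional_extensionality => l; apply: fE.
case: (leqP K N) => HK.
  apply: (Dext (st_prodr HD (IH HK))) => x.
  have -> : (fun l => init x (widen_ord HK l)) = (fun l => x (widen_ord H l)) => //.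
  by apply: functional_extensionality => l; rewrite /init; apply: fE.
have eK : K = N.+1 by apply/eqP; rewrite eqn_leq H HK.
subst K.
apply: (Dext HA) => x.
have -> : (fun l => x (widen_ord H l)) = x => //.
by apply: functional_extensionality => l; apply: fE.
Qed.

Lemma Dpadl K A : D K A -> forall p,
  D (p + K) (fun w => A (fun l => w (rshift p l))).
Proof.
move=> HA; elim => [|p IH].
  apply: (Dext HA) => x.
  have -> : (fun l => x (rshift 0 l)) = x => //.
  by apply: functional_extensionality => l; apply: fE.
apply: (Dext (st_prodl HD IH)) => x.
have -> : (fun l => tailc x (rshift p l)) = (fun l => x (rshift p.+1 l)) => //.
by apply: functional_extensionality => l; rewrite /tailc; apply: fE => /=; rewrite /bump /= add1n.
Qed.

Lemma Deq N (p q : 'I_N) : D N (fun w => w p = w q).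
Proof.
wlog lepq : p q / (p <= q)%N.
  move=> W; case: (leqP p q) => H; first exact: W.
  apply: (Dext (W q p (ltnW H))) => x; by split => ->.
case: (ltngtP p q) lepq => // [ltpq|epq] _; last first.
  by apply: (Dext (@Dtrue N)) => x; split => // _; apply: fE.
set e := (q - p)%N.
have He : (p + e.+1 <= N)%N.
  by rewrite /e addnS subnKC ?(ltnW ltpq).
apply: (Dext (Dpadr (Dpadl (st_diag HD e) p) He)) => x.
rewrite (@fE _ x (widen_ord He (rshift p ord0)) p) /=; last by rewrite addn0.
rewrite (@fE _ x (widen_ord He (rshift p ord_max)) q) //=.
by rewrite /e subnKC ?(ltnW ltpq).
Qed.

Lemma wid_id n (H : (n <= n)%N) (x : 'I_n -> M) : (fun i => x (widen_ord H i)) = x.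
Proof. by apply: functional_extensionality => i; apply: fE. Qed.

Lemma Dproj N : forall n (H : (n <= N)%N) B, D N B ->
  D n (fun x => exists w, B w /\ forall i, w (widen_ord H i) = x i).
Proof.
elim: N => [|N IH] n H B HB.
  have en : n = 0%N by apply/eqP; rewrite -leqn0.
  subst n; apply: (Dext HB) => x; split.
    by move=> Bx; exists x; split => // i; apply: fE.
  move=> [w [Bw Hw]]; suff <- : w = x by [].
  by apply: functional_extensionality => i; rewrite -Hw; apply: fE.
case: (leqP n N) => HK.
  apply: (Dext (IH n HK _ (st_proj HD HB))) => x; split.
    move=> [y [[z [Bz Hz]] Hy]]; exists z; split => // i.
    by rewrite -Hy -Hz /init; apply: fE.
  move=> [w [Bw Hw]]; exists (init w); split; first by exists w.
  by move=> i; rewrite -Hw /init; apply: fE.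
have en : n = N.+1 by apply/eqP; rewrite eqn_leq H HK.
subst n; apply: (Dext HB) => x; split.
  by move=> Bx; exists x; split => // i; apply: fE.
move=> [w [Bw Hw]]; suff <- : w = x by [].
by apply: functional_extensionality => i; rewrite -Hw; apply: fE.
Qed.

Definition join n k (x : 'I_n -> M) (y : 'I_k -> M) : 'I_(n + k)%N -> M :=
  fun i => match split i with inl a => x a | inr b => y b end.

Lemma joinL n k x y (i : 'I_n) : @join n k x y (lshift k i) = x i.
Proof. by rewrite /join (unsplitK (inl i)). Qed.
Lemma joinR n k x y (i : 'I_k) : @join n k x y (rshift n i) = y i.
Proof. by rewrite /join (unsplitK (inr i)). Qed.

Lemma Dreindex k n (f : 'I_k -> 'I_n) A : D k A ->
  D n (fun x => A (fun l => x (f l))).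
Proof.
move=> HA.
have HT : D (n + k)%N (fun w => A (fun l => w (rshift n l)) /\ forall l, w (rshift n l) = w (lshift k (f l))).
  apply: Dand; first exact: Dpadl.
  by apply: Dall_fin => l; apply: Deq.
apply: (Dext (Dproj (leq_addr k n) HT)) => x; split.
  move=> [w [[Aw Ew] Hw]].
  suff <- : (fun l => w (rshift n l)) = (fun l => x (f l)) by [].
  apply: functional_extensionality => l; rewrite Ew -Hw; apply: fE => //.
move=> Ax; exists (join x (fun l => x (f l))); split; last first.
  by move=> i; rewrite -(joinL x (fun l => x (f l)) i); apply: fE.
split; last by move=> l; rewrite joinR joinL.
suff -> : (fun l => join x (fun l0 => x (f l0)) (rshift n l)) = (fun l => x (f l)) by [].
by apply: functional_extensionality => l; rewrite joinR.
Qed.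

Lemma Dex n k (B : ('I_n -> M) -> ('I_k -> M) -> Prop) :
  D (n + k)%N (fun w => B (fun i => w (lshift k i)) (fun l => w (rshift n l))) ->
  D n (fun x => exists y, B x y).
Proof.
move=> HB; apply: (Dext (Dproj (leq_addr k n) HB)) => x; split.
  move=> [w [Bw Hw]]; exists (fun l => w (rshift n l)).
  suff <- : (fun i => w (lshift k i)) = x by [].
  by apply: functional_extensionality => i; rewrite -Hw; apply: fE.
move=> [y Bxy]; exists (join x y); split; last first.
  by move=> i; rewrite -(joinL x y i); apply: fE.
suff -> : (fun i => join x y (lshift k i)) = x.
  suff -> : (fun l => join x y (rshift n l)) = y by [].
  by apply: functional_extensionality => l; rewrite joinR.
by apply: functional_extensionality => l; rewrite joinL.
Qed.

Lemma Dall n k (B : ('I_n -> M) -> ('I_k -> M) -> Prop) :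
  D (n + k)%N (fun w => B (fun i => w (lshift k i)) (fun l => w (rshift n l))) ->
  D n (fun x => forall y, B x y).
Proof.
move=> HB.
have := Dnot (@Dex n k (fun x y => ~ B x y) (Dnot HB)).
move/Dext; apply => x; split.
  by move=> H y; apply: NNPP => H'; apply: H; exists y.
by move=> H [y Hy]; apply: Hy.
Qed.

Lemma Dlt N (p q : 'I_N) : D N (fun w => lt (w p) (w q)).
Proof.
apply: (Dext (Dreindex (fun l : 'I_2 => if val l == 0%N then p else q) (st_lt HD))).
by move=> x.
Qed.

Lemma Dpt N (p : 'I_N) c : D N (fun w => w p = c).
Proof.
by apply: (Dext (Dreindex (fun l : 'I_1 => p) (st_point HD c))).
Qed.

Lemma Dadd N (p q r : 'I_N) : D N (fun w => w p + w q = w r).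
Proof.
apply: (Dext (Dreindex (fun l : 'I_3 => if val l == 0%N then p else
   if val l == 1%N then q else r) (st_add HD))).
by move=> x /=; rewrite inordK.
Qed.

Lemma nle_lt x y : ~ le lt x y -> lt y x.
Proof.
move=> H; case: (lt_tri x y) => [h|h|h] //; exfalso; apply: H; by [left|right].
Qed.

Lemma Dpos N (p : 'I_N) : D N (fun w => lt 0 (w p)).
Proof.
have := @Dex N 1 (fun x y => y ord0 = 0 /\ lt (y ord0) (x p))
  (Dand (Dpt _ _) (Dlt _ _)).
move/Dext; apply => x; split; first by move=> [y [-> h]].
by move=> h; exists (fun _ => 0).
Qed.

Lemma Dlo N (p q : 'I_N) c : D N (fun w => lt (- w p) (w q - c)).
Proof.
have := @Dex N 2 (fun x y => y ord0 = c /\ x q + x p = y ord_max /\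
   lt (y ord0) (y ord_max)) (Dand (Dpt _ _) (Dand (Dadd _ _ _) (Dlt _ _))).
move/Dext; apply => x; rewrite boxlo; split; first by move=> [y [-> [-> h]]].
move=> h; exists (fun l => if val l == 0%N then c else x q + x p) => /=.
by split.
Qed.

Lemma Dhi N (p q : 'I_N) c : D N (fun w => lt (w q - c) (w p)).
Proof.
have := @Dex N 2 (fun x y => y ord0 = c /\ x p + y ord0 = y ord_max /\
   lt (x q) (y ord_max)) (Dand (Dpt _ _) (Dand (Dadd _ _ _) (Dlt _ _))).
move/Dext; apply => x; rewrite boxhi; split; first by move=> [y [-> [<- h]]].
move=> h; exists (fun l => if val l == 0%N then c else x p + c) => /=.
by split.
Qed.

Lemma Dle N (p q : 'I_N) : D N (fun w => le lt (w p) (w q)).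
Proof. exact: Dor (Dlt _ _) (Deq _ _). Qed.
Definition extv m (x : 'I_m -> M) (v : M) : 'I_m.+1 -> M :=
  fun l => match unlift ord_max l with Some i => x i | None => v end.

Lemma extv_init m x v : init (@extv m x v) = x.
Proof.
apply: functional_extensionality => i; rewrite /init /extv.
have -> : widen_ord (leqnSn m) i = lift ord_max i by apply: ord_inj; rewrite lift_max.
by rewrite liftK.
Qed.

Lemma extv_max m x v : @extv m x v ord_max = v.
Proof. by rewrite /extv unlift_none. Qed.

Definition boxk m k (a : 'I_m -> M) d (x : 'I_m -> M) :=
  forall i : 'I_m, (i < k)%N -> lt (-d) (x i - a i) /\ lt (x i - a i) d.

Section Defin.
Variables (m : nat) (C : ('I_m -> M) -> Prop) (phi : ('I_m -> M) -> M).
Hypothesis Hphi : def_fun D C phi.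

Definition Bv k (a : 'I_m -> M) (j : 'I_m) t d e (y : 'I_m.+1 -> M) :=
  (C (init y) /\ y ord_max = phi (init y)) /\
  (forall i : 'I_m, (i < k)%N -> lt (-d) (init y i - a i) /\ lt (init y i - a i) d) /\
  le lt t (init y j) /\ lt (y ord_max) e.

Lemma DQ k a j N (pt pd pe : 'I_N) :
  D N (fun w => lt 0 (w pd) -> lt 0 (w pe) -> exists y, Bv k a j (w pt) (w pd) (w pe) y).
Proof.
apply: Dimp; first exact: Dpos.
apply: Dimp; first exact: Dpos.
apply: (@Dex N m.+1 (fun x y => Bv k a j (x pt) (x pd) (x pe) y)).
apply: Dand; first exact: (Dreindex (fun l => rshift N l) Hphi).
apply: Dand.
  apply: Dall_fin => i; apply: Dif; apply: Dand.
    exact: (Dlo (lshift _ pd) (rshift N (widen_ord (leqnSn m) i)) (a i)).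
  exact: (Dhi (lshift _ pd) (rshift N (widen_ord (leqnSn m) i)) (a i)).
apply: Dand; first exact: (Dle (lshift _ pt) (rshift N (widen_ord (leqnSn m) j))).
exact: (Dlt (rshift N ord_max) (lshift _ pe)).
Qed.

Lemma def_A k a j : def1 D (fun t => forall d e, lt 0 d -> lt 0 e ->
  exists x, C x /\ boxk k a d x /\ le lt t (x j) /\ lt (phi x) e).
Proof.
have := @Dall 1 2 (fun x y => lt 0 (y ord0) -> lt 0 (y ord_max) ->
   exists y', Bv k a j (x ord0) (y ord0) (y ord_max) y')
  (DQ k a j (lshift 2 ord0) (rshift 1 ord0) (rshift 1 ord_max)).
move/Dext; apply => z; split.
  move=> H d e hd he.
  have := H (fun l => if val l == 0%N then d else e) hd he.
  move=> [y [[Cy ey] [by_ [ly ly']]]]; exists (init y); split => //.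
  by split => //; split => //; rewrite -ey.
move=> H y2 hd he; have [x [Cx [bx [lx px]]]] := H _ _ hd he.
exists (extv x (phi x)); rewrite /Bv extv_init extv_max; split => //.
Qed.

Lemma def_S : def1 D (fun v => exists x, C x /\ v = phi x).
Proof.
have := @Dex 1 m.+1 (fun z y => (C (init y) /\ y ord_max = phi (init y)) /\
   z ord0 = y ord_max)
  (Dand (Dreindex (fun l => rshift 1 l) Hphi) (Deq (lshift _ ord0) (rshift 1 ord_max))).
move/Dext; apply => z; split.
  by move=> [y [[Cy ->] ->]]; exists (init y).
move=> [x [Cx ->]]; exists (extv x (phi x)).
by rewrite extv_init extv_max.
Qed.

End Defin.
Section Arg.
Variables (m : nat) (C : ('I_m -> M) -> Prop) (phi psi : ('I_m -> M) -> M).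
Hypothesis Hphi : def_fun D C phi.
Hypothesis Hdc : def_complete lt D.
Hypothesis HCcl : closed_set lt C.
Variable r : M.
Hypothesis Hr : forall x, C x -> forall i, lt (- r) (x i) /\ lt (x i) r.
Hypothesis Hpsipos : forall x, C x -> lt 0 (psi x).
Hypothesis Hloc : forall x, C x -> exists delta, lt 0 delta /\
      forall x', C x' -> near_box lt delta x x' -> le lt (psi x) (phi x').
Variable e0 : M.
Hypothesis He0 : lt 0 e0.

Definition PP k a := forall d e, lt 0 d -> lt 0 e ->
  exists x, C x /\ boxk k a d x /\ lt (phi x) e.

Lemma step k (Hk : (k < m)%N) a : PP k a ->
  exists b, PP k.+1 (fun i => if val i == k then b else a i).
Proof.
move=> PK; set j := Ordinal Hk.
set A := fun t => forall d e, lt 0 d -> lt 0 e ->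
  exists x, C x /\ boxk k a d x /\ le lt t (x j) /\ lt (phi x) e.
have DA : def1 D A by exact: def_A.
have Ar : A (- r).
  move=> d e hd he; have [x [Cx [bx hx]]] := PK d e hd he.
  by exists x; split => //; split => //; split => //; left; case: (Hr Cx j).
have [Hsup _] := Hdc DA (ex_intro _ _ Ar).
have [b [ub lub]] : exists b, is_lub lt A b.
  apply: Hsup.
  exists r => y Ay; have [x [Cx [_ [lx _]]]] := Ay e0 e0 He0 He0.
  by left; apply: (le_lt _ _ _ lx); case: (Hr Cx j).
exists b => d e hd he.
have [t [At ht]] : exists t, A t /\ lt (b - d) t.
  apply: NNPP => H.
  have : le lt b (b - d).
    apply: lub => y Ay; apply: nlt_le => h; apply: H; by exists y.
  by move/le_nlt; apply; apply: lt_subpos.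
have nA : ~ A (b + d).
  by move=> h; have := ub _ h; move/le_nlt; apply; apply: lt_addpos.
have [d1 [e1 [hd1 [he1 hn]]]] : exists d1 e1, lt 0 d1 /\ lt 0 e1 /\
   ~ (exists x, C x /\ boxk k a d1 x /\ le lt (b + d) (x j) /\ lt (phi x) e1).
  apply: NNPP => H; apply: nA => d1 e1 hd1 he1; apply: NNPP => hn.
  by apply: H; exists d1, e1.
have [d2 [hd2 ld2 ld2']] := minpos _ _ hd hd1.
have [e2 [he2 le2 le2']] := minpos _ _ he he1.
have [x [Cx [bx [lx px]]]] := At d2 e2 hd2 he2.
have bx1 : boxk k a d1 x by move=> i hi; apply: box_mono ld2' (bx i hi).
have px1 : lt (phi x) e1 by apply: lt_le px le2'.
have hup : lt (x j) (b + d).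
  by apply: nle_lt => h; apply: hn; exists x.
have hlo : lt (b - d) (x j) by apply: lt_le ht lx.
exists x; split => //; split; last by apply: lt_le px le2.
move=> i hi; case: (ltngtP i k) hi => [hik _|hki hi|eik _].
- by apply: box_mono ld2 (bx i hik).
- by rewrite ltnS leqNgt hki in hi.
have -> : i = j by apply: ord_inj.
split.
  by rewrite boxlo; move: (ltD _ _ d hlo); rewrite addrNK.
by rewrite boxhi addrC.
Qed.

Lemma iter (H0 : forall e, lt 0 e -> exists x, C x /\ lt (phi x) e) :
  forall k, (k <= m)%N -> exists a, PP k a.
Proof.
elim => [|k IH] hk.
  exists (fun _ => 0) => d e hd he; have [x [Cx px]] := H0 e he.
  by exists x; split => //; split => // i.
have [a Pa] := IH (ltnW hk).
have [b Pb] := step hk Pa; by eexists; exact: Pb.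
Qed.

Lemma no_zero (H0 : forall e, lt 0 e -> exists x, C x /\ lt (phi x) e) : False.
Proof.
have [a Pa] := iter H0 (leqnn m).
have Ca : C a.
  apply: NNPP => nCa; have [dl [hdl Hdl]] := HCcl nCa.
  have [x [Cx [bx _]]] := Pa dl e0 hdl He0.
  by apply: (Hdl x) => // i; apply: bx.
have [dl [hdl Hdl]] := Hloc Ca.
have [x [Cx [bx px]]] := Pa dl (psi a) hdl (Hpsipos Ca).
have := Hdl x Cx (fun i => bx i (ltn_ord i)).
by move/le_nlt; apply.
Qed.
End Arg.
Lemma mainsec (Hdc : def_complete lt D)
  (m : nat) (C : ('I_m -> M) -> Prop)
  (HCcl : closed_set lt C) (HCbd : bounded_set lt C)
  (phi psi : ('I_m -> M) -> M)
  (Hphi : def_fun D C phi)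
  (Hphipos : forall x, C x -> lt 0 (phi x))
  (Hpsipos : forall x, C x -> lt 0 (psi x))
  (Hloc : forall x, C x -> exists delta, lt 0 delta /\
      forall x', C x' -> near_box lt delta x x' -> le lt (psi x) (phi x')) :
  (forall x, ~ C x) \/
  exists s, is_glb lt (fun y => exists x, C x /\ y = phi x) s /\ lt 0 s.
Proof.
case: (classic (exists x0, C x0)) => [[x0 Cx0]|nC]; last first.
  by left => x Cx; apply: nC; exists x.
right; have [r Hr] := HCbd.
have DS := def_S Hphi.
have [_ Hinf] := Hdc _ DS (ex_intro _ _ (ex_intro _ x0 (conj Cx0 erefl))).
have [s [lb glb]] : exists s, is_glb lt (fun y => exists x, C x /\ y = phi x) s.
  by apply: Hinf; exists 0 => y [x [Cx ->]]; left; apply: Hphipos.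
exists s; split => //.
have h0 : le lt 0 s by apply: glb => y [x [Cx ->]]; left; apply: Hphipos.
case: h0 => // e0s; exfalso.
apply: (no_zero Hphi Hdc HCcl Hr Hpsipos Hloc (Hphipos _ Cx0)).
move=> e he; apply: NNPP => H.
have : le lt e s.
  apply: glb => y [x [Cx ->]]; apply: nlt_le => h; apply: H; by exists x.
by rewrite -e0s => /le_nlt; apply.
Qed.

End All.

Theorem mainTheorem14 (M : zmodType) (lt : M -> M -> Prop)
  (D : forall n, (('I_n -> M) -> Prop) -> Prop)
  (HM : ordered_group lt) (HD : is_structure lt D)
  (Hdc : def_complete lt D) (Hlo : loc_ominimal lt D)
  (m : nat) (C : ('I_m -> M) -> Prop)
  (HCdef : D m C) (HCcl : closed_set lt C) (HCbd : bounded_set lt C)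
  (phi psi : ('I_m -> M) -> M)
  (Hphi : def_fun D C phi) (Hpsi : def_fun D C psi)
  (Hphipos : forall x, C x -> lt 0 (phi x))
  (Hpsipos : forall x, C x -> lt 0 (psi x))
  (Hloc : forall x, C x -> exists delta, lt 0 delta /\
      forall x', C x' -> near_box lt delta x x' -> le lt (psi x) (phi x')) :
  (forall x, ~ C x) \/
  exists s, is_glb lt (fun y => exists x, C x /\ y = phi x) s /\ lt 0 s.
Proof. exact: (mainsec HD HM Hdc HCcl HCbd Hphi Hphipos Hpsipos Hloc). Qed.
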